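(* Let $N\ge 1$, let $q\in\mathbb C$, and let $S_N$ be the symmetric group with group algebra $\mathbb C[S_N]$, with composition convention $(\sigma_2\sigma_1)(i)=\sigma_2(\sigma_1(i))$. For a transposition $t=(A,A+1)$ of neighboring integers and $x\in\mathbb C$, let $w_{t,x}:\mathbb C[S_N]\to\mathbb C[S_N]$ be the linear operator given on $\sigma\in S_N$ by $$w_{t,x}(\sigma)=\begin{cases}(1-x)\sigma+x\,t\sigma, & \text{if } \sigma^{-1}(A)<\sigma^{-1}(A+1),\\ (1-qx)\sigma+qx\,t\sigma, & \text{if } \sigma^{-1}(A)>\sigma^{-1}(A+1).\end{cases}$$ For transpositions of neighboring integers $t_1,\dots,t_n$ and parameters $x_1,\dots,x_n\in\mathbb C$, define coefficients $f_n(s\to\pi)$, $s,\pi\in S_N$, by $$w_{t_n,x_n}w_{t_{n-1},x_{n-1}}\cdots w_{t_1,x_1}\, s=\sum_{\pi\in S_N} f_n(s\to\pi)\,\pi .$$ Let $T=(i,i+1)$ be a transposition of neighboring integers, let $s,\pi\in S_N$ be arbitrary with $s(i)<s(i+1)$, and let $t_1,\dots,t_n$, $x_1,\dots,x_n$ be arbitrary. Then $$f_n(sT\to\pi)=\begin{cases} f_n(s\to\pi T)+(1-q)f_n(s\to\pi), & \text{if } \pi(i)>\pi(i+1),\\ q\,f_n(s\to \pi T), & \text{if } \pi(i)<\pi(i+1).\end{cases}$$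
   Context: All objects are defined in the claim. Note that $sT$ and $\pi T$ denote compositions in $S_N$ (first apply $T$, then $s$ resp. $\pi$). *)

(* Defs.v *)
From HB Require Import structures.
From mathcomp Require Import all_boot all_order all_algebra all_fingroup.
From mathcomp Require Import complex.
From mathcomp Require Import reals.
Set Implicit Arguments. Unset Strict Implicit. Unset Printing Implicit Defensive.
Import Order.TTheory GRing.Theory Num.Theory.
Local Open Scope ring_scope.

(* The group algebra C[S_N] is represented by finite functions 'S_N -> C;
   the points {1..N} of the paper are the ordinals 'I_N = {0..N-1}.
   MathComp convention: (s * t) x = t (s x), so the paper's product
   s2 s1 (first s1, then s2) is s1 * s2 in MathComp. *)

Notation galg K N := {ffun 'S_N -> K}.

Definition ebase (K : nzRingType) (N : nat) (sigma : 'S_N) : galg K N :=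
  [ffun tau => (tau == sigma)%:R].

(* adjacent transposition (A, A+1), for A.+1 < N (0-based) *)
Definition adjt (N : nat) (A : nat) : 'S_N.-1.+1 :=
  tperm (inord A) (inord A.+1).

(* w_{t,x} on a basis element, t = (A, A+1); paper's "t sigma" = sigma * t *)
Definition w_basis (K : comNzRingType) (N : nat) (q : K) (A : nat) (x : K)
    (sigma : 'S_N.-1.+1) : galg K N.-1.+1 :=
  if ((sigma^-1)%g (inord A) < (sigma^-1)%g (inord A.+1))%N
  then [ffun tau => (1 - x) * ebase K sigma tau
                    + x * ebase K (sigma * adjt N A)%g tau]
  else [ffun tau => (1 - q * x) * ebase K sigma tau
                    + (q * x) * ebase K (sigma * adjt N A)%g tau].

Definition w_op (K : comNzRingType) (N : nat) (q : K) (A : nat) (x : K)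
    (v : galg K N.-1.+1) : galg K N.-1.+1 :=
  [ffun tau => \sum_(sigma : 'S_N.-1.+1) v sigma * w_basis q A x sigma tau].

(* w_{t_n,x_n} ... w_{t_1,x_1} v, with t_k = (tA (k-1), tA (k-1) + 1),
   x_k = xs (k-1) *)
Fixpoint w_iter (K : comNzRingType) (N : nat) (q : K) (tA : nat -> nat)
    (xs : nat -> K) (n : nat) (v : galg K N.-1.+1) : galg K N.-1.+1 :=
  match n with
  | 0 => v
  | k.+1 => w_op q (tA k) (xs k) (w_iter q tA xs k v)
  end.

Definition fcoef (K : comNzRingType) (N : nat) (q : K) (tA : nat -> nat)
    (xs : nat -> K) (n : nat) (s pi : 'S_N.-1.+1) : K :=
  w_iter q tA xs n (ebase K s) pi.

(* Main.v *)
Require Import Defs.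
From HB Require Import structures.
From mathcomp Require Import all_boot all_order all_algebra all_fingroup.
From mathcomp Require Import ring lra zify.
From mathcomp Require Import complex.
From mathcomp Require Import reals.
Set Implicit Arguments. Unset Strict Implicit. Unset Printing Implicit Defensive.
Import Order.TTheory GRing.Theory Num.Theory.
Local Open Scope ring_scope.

Section Gen.
Variables (K : comNzRingType) (N : nat).
Local Notation SN := 'S_N.-1.+1.

Lemma tperm_eqmul (x y : 'I_N.-1.+1) (s t : SN) :
  (t == s * tperm x y)%g = (s == t * tperm x y)%g.
Proof.
by apply/eqP/eqP => ->; rewrite -mulgA tperm2 mulg1.
Qed.

Definition cw (A : nat) (s : SN) :=
  ((s^-1)%g (inord A) < (s^-1)%g (inord A.+1))%N.

Lemma w_opE (q : K) A x (v : galg K N.-1.+1) tau :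
  w_op q A x v tau = (if cw A tau then 1 - x else 1 - q * x) * v tau
     + (if cw A (tau * adjt N A)%g then x else q * x) * v (tau * adjt N A)%g.
Proof.
rewrite /w_op ffunE.
transitivity (\sum_(s : SN) ((if cw A s then 1 - x else 1 - q * x) * v s * (tau == s)%:R
   + (if cw A s then x else q * x) * v s * (tau == s * adjt N A)%g%:R)).
  apply: eq_bigr => s _; rewrite /w_basis -/(cw A s).
  by case: ifP => _; rewrite !ffunE; ring.
rewrite big_split /=. rewrite (bigD1 tau) //= big1 => [|s hs]; last first.
  by rewrite eq_sym (negbTE hs) mulr0.
rewrite (bigD1 (tau * adjt N A)%g) //= big1 => [|s hs]; last first.
  by rewrite tperm_eqmul (negbTE hs) mulr0.
by rewrite eqxx tperm_eqmul eqxx !mulr1 !addr0.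
Qed.


Lemma tperm_lt_adj (n : nat) (p p' x y : 'I_n) : val p' = (val p).+1 -> x != y ->
  ~~ ((x == p) && (y == p') || (x == p') && (y == p)) ->
  (tperm p p' x < tperm p p' y)%N = (x < y)%N.
Proof.
move=> hp hxy hE.
have tv z : val (tperm p p' z) = if val z == val p then val p' else if val z == val p' then val p else val z.
  by case: tpermP => [->|->|n1 n2]; rewrite ?eqxx //; [rewrite hp; case: eqP => //; lia | rewrite !val_eqE (introF eqP n1) (introF eqP n2)].
move: hxy hE; rewrite -!val_eqE !tv; clear tv.
case: x y p p' hp => [X ?] [Y ?] [P ?] [P' ?] /= ->.
by do 4 case: eqP => ? /=; move=> h5 h6; repeat (case: eqP => ?); apply/idP/idP; lia.
Qed.

Lemma tperm_val n (a b z : 'I_n) :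
  val (tperm a b z) = if val z == val a then val b else if val z == val b then val a else val z.
Proof.
case: tpermP => [->|->|n1 n2]; rewrite ?eqxx //.
  by case: eqP => // /val_inj ->.
by rewrite !val_eqE (introF eqP n1) (introF eqP n2).
Qed.

Variables (q : K) (i : nat) (hi : (i.+1 < N)%N).
Local Notation T := (adjt N i).
Local Notation p := (inord i : 'I_N.-1.+1).
Local Notation p' := (inord i.+1 : 'I_N.-1.+1).

Lemma val_inord_lt k : (k < N)%N -> val (inord k : 'I_N.-1.+1) = k.
Proof. by move=> hk; apply: inordK; rewrite prednK //; lia. Qed.

Definition ch (s : SN) := (s p < s p')%N.

Definition Hop (v : galg K N.-1.+1) : galg K N.-1.+1 :=
  [ffun tau => (if ch tau then 0 else 1 - q) * v tau
             + (if ch (T * tau)%g then 1 else q) * v (T * tau)%g].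

Lemma HopE v tau : Hop v tau = (if ch tau then 0 else 1 - q) * v tau
             + (if ch (T * tau)%g then 1 else q) * v (T * tau)%g.
Proof. by rewrite ffunE. Qed.

Section A.
Variables (A : nat) (hA : (A.+1 < N)%N).
Local Notation t := (adjt N A).
Local Notation a := (inord A : 'I_N.-1.+1).
Local Notation a' := (inord A.+1 : 'I_N.-1.+1).

Definition E (s : SN) :=
  ((s p == a) && (s p' == a')) || ((s p == a') && (s p' == a)).

Lemma hp : val p' = (val p).+1.
Proof. rewrite !val_inord_lt //; lia. Qed.
Lemma ha : val a' = (val a).+1.
Proof. rewrite !val_inord_lt //; lia. Qed.
Lemma pp' : p != p'.
Proof. apply/eqP => /(congr1 val) h; by move: hp; rewrite h; apply: n_Sn. Qed.
Lemma aa' : a != a'.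
Proof. by apply/eqP => /(congr1 val) h; move: ha; rewrite h; apply: n_Sn. Qed.

Lemma L1 s : ~~ E s -> cw A (T * s)%g = cw A s.
Proof.
move=> hE; rewrite /cw invMg tpermV !permM tperm_lt_adj //.
- exact: hp.
- by rewrite (inj_eq perm_inj) aa'.
rewrite !(canF_eq (permKV s)) ![a == _]eq_sym ![a' == _]eq_sym.
by move: hE; rewrite /E [X in _ || X]andbC.
Qed.

Lemma L2 s : ~~ E s -> ch (s * t)%g = ch s.
Proof.
move=> hE; rewrite /ch !permM tperm_lt_adj //.
- exact: ha.
- by rewrite (inj_eq perm_inj) pp'.
Qed.

Lemma L3T s : E (T * s)%g = E s.
Proof. by rewrite /E !permM tpermL tpermR orbC andbC [X in _ || X]andbC. Qed.

Lemma L3t s : E (s * t)%g = E s.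
Proof.
rewrite /E !permM.
have hs : s p != s p' by rewrite (inj_eq perm_inj) pp'.
move: (s p) (s p') hs aa' => X Y.
rewrite /adjt -!val_eqE !tperm_val.
case: X Y (inord A : 'I_N.-1.+1) (inord A.+1 : 'I_N.-1.+1) => [X ?] [Y ?] [U ?] [V ?] /=.
move=> h1 h2; case: (X =P U) => ?; case: (X =P V) => ?; case: (Y =P U) => ?; case: (Y =P V) => ? /=;
  repeat (case: eqP => ? /=); try lia.
Qed.

Lemma nat_inord k : (k < N)%N -> nat_of_ord (inord k : 'I_N.-1.+1) = k.
Proof. exact: val_inord_lt. Qed.

Lemma L4 s : E s -> (T * s)%g = (s * t)%g.
Proof.
move=> hE; apply/permP => z; rewrite !permM.
have hsz : forall w, w != p -> w != p' -> s w != s p /\ s w != s p'.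
  by move=> w h1 h2; rewrite !(inj_eq perm_inj).
case: (tpermP p p' z) => [->|->|n1 n2].
- by case/orP: hE => /andP [/eqP e1 /eqP e2]; rewrite e1 e2 ?tpermL ?tpermR.
- by case/orP: hE => /andP [/eqP e1 /eqP e2]; rewrite e1 e2 ?tpermL ?tpermR.
have [h1 h2] := hsz z (introN eqP n1) (introN eqP n2).
by case/orP: hE => /andP [/eqP e1 /eqP e2]; rewrite tpermD // -?e1 -?e2 eq_sym.
Qed.

Lemma L5 s : E s -> [/\ cw A s = ch s, cw A (s * t)%g = ~~ cw A s & ch (s * t)%g = ~~ ch s].
Proof.
rewrite /cw /ch invMg tpermV !permM.
case/orP => /andP [/eqP e1 /eqP e2]; rewrite ?tpermL ?tpermR -?e1 -?e2 !permK ?e1 ?e2 ?tpermL ?tpermR.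
all: rewrite !nat_inord //; try lia; by rewrite !ltnSn !ltnNge !leqnSn.
Qed.
Lemma comm x v tau : @w_op K N q A x (Hop v) tau = Hop (@w_op K N q A x v) tau.
Proof.
rewrite (w_opE q A x (Hop v) tau) !HopE !(w_opE q A x v) !mulgA.
case: (boolP (E tau)) => hE.
  have [e1 e2 e3] := L5 hE.
  rewrite (L4 hE) -mulgA tperm2 mulg1 e2 e3 e1.
  by case: (ch tau) => /=; ring.
have f1 : cw A (T * tau * t)%g = cw A (tau * t)%g by rewrite -mulgA L1 // L3t.
have f2 : ch (T * tau * t)%g = ch (T * tau)%g by rewrite L2 // L3T.
rewrite f1 f2 (L1 hE) (L2 hE); ring.
Qed.
End A.
Lemma Hop_e s : ch s -> Hop (ebase K s) = ebase K (T * s)%g.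
Proof.
move=> hs; apply/ffunP => tau; rewrite HopE /ebase !ffunE.
have ee : (T * tau == s)%g = (tau == T * s)%g.
  by apply/eqP/eqP => [<-|->]; rewrite mulgA tperm2 mul1g.
case: (eqVneq tau s) => [->|ne].
  have nT : (T * s)%g != s.
    apply/eqP => /(congr1 (fun f : SN => f p)); rewrite permM tpermL => /perm_inj h.
    by move: (pp' hi); rewrite h eqxx.
  by rewrite hs (negbTE nT) eq_sym (negbTE nT) mul0r add0r mulr0.
rewrite mulr0 add0r ee; case: eqP => [->|_]; rewrite ?mulr0 //.
by rewrite mulgA tperm2 mul1g hs mulr1.
Qed.

Lemma iter_comm (tA : nat -> nat) (xs : nat -> K) n :
  (forall k, (k < n)%N -> ((tA k).+1 < N)%N) ->
  forall v, @w_iter K N q tA xs n (Hop v) = Hop (@w_iter K N q tA xs n v).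
Proof.
elim: n => [//|n IH] htA v /=.
rewrite IH; last by move=> k hk; apply: htA; lia.
by apply/ffunP => tau; rewrite (comm (htA n (ltnSn n))).
Qed.

End Gen.

Theorem proposition2p1 (R : realType) (N : nat) (hN : (1 <= N)%N) (q : R[i])
    (n : nat) (tA : nat -> nat) (xs : nat -> R[i])
    (htA : forall k, (k < n)%N -> ((tA k).+1 < N)%N)
    (i : nat) (hi : (i.+1 < N)%N) (s pi : 'S_N.-1.+1)
    (hs : (s (inord i) < s (inord i.+1))%N) :
  fcoef q tA xs n (adjt N i * s)%g pi =
  (if (pi (inord i) > pi (inord i.+1))%N
   then fcoef q tA xs n s (adjt N i * pi)%g + (1 - q) * fcoef q tA xs n s pi
   else q * fcoef q tA xs n s (adjt N i * pi)%g).
Proof.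
rewrite /fcoef -(Hop_e q hi hs) (@iter_comm _ _ q i hi tA xs n htA) HopE /ch !permM /adjt tpermL tpermR -/(adjt N i).
case: ltngtP => h.
- by rewrite mul0r add0r.
- by rewrite mul1r addrC.
- by move: (pp' hi); rewrite (perm_inj (val_inj h)) => /(_ i hi); rewrite eqxx.
Qed.
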